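(* Let $(\gamma_n)$ be a sequence of positive reals satisfying conditions (C1)–(C7) below, with associated orthonormal polynomials $p_n$ and operators $K^n$. For $\omega\in\mathbb{R}$ let $e_\omega(t)=e^{i\omega t}$. Then for every $\omega\in\mathbb{R}$, $e_\omega\in\mathcal{L}$ and $\lim_{n\to\infty}\gamma_n\bigl(|K^n[e_\omega(t)]|^2+|K^{n+1}[e_\omega(t)]|^2\bigr)$ is a positive finite number (so $e_\omega$ represents a nonzero element of $\mathcal{L}_2$). Moreover, for all real $\omega\neq\sigma$ and all $t\in\mathbb{R}$, \[ \lim_{n\to\infty}\frac{\sum_{k=0}^n K^k_t[e^{i\omega t}]\,K^k_t\bigl[\overline{e^{i\sigma t}}\bigr]}{\sum_{j=0}^n \frac{1}{\gamma_j}}=0. \]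
   Context: Given positive reals $\gamma_n$, set $\gamma_{-1}=1$, $p_{-1}=0$, $p_0=1$ and $\gamma_n p_{n+1}(\omega)=\omega p_n(\omega)-\gamma_{n-1}p_{n-1}(\omega)$ ($n\ge0$). Let $\Delta_n=\gamma_{n+1}-\gamma_n$, $\Delta^2_n=\Delta_{n+1}-\Delta_n$. Conditions: (C1) $\gamma_n\to\infty$; (C2) $\Delta_n\to0$; (C3) there exist $n_0,m_0$ with $\gamma_{n+m}>\gamma_n$ for all $n\ge n_0$, $m\ge m_0$; (C4) $\sum 1/\gamma_j=\infty$; (C5) some $\kappa>1$ has $\sum\gamma_j^{-\kappa}<\infty$; (C6) $\sum|\Delta_n|/\gamma_n^2<\infty$; (C7) $\sum|\Delta^2_n|/\gamma_n<\infty$. Let $C^\infty_{\mathbb{R}\to\mathbb{C}}$ be the set of functions $f:\mathbb{R}\to\mathbb{C}$ whose real and imaginary parts are infinitely differentiable. Define the differential operators $K^n_t=(-i)^n p_n\!\left(i\frac{d}{dt}\right)$ (so $K^n_t[e^{i\omega t}]=i^n p_n(\omega)e^{i\omega t}$). $\mathcal{L}$ is the set of $f\in C^\infty_{\mathbb{R}\to\mathbb{C}}$ such that $\beta_n^f(t)=\gamma_n(|K^n[f(t)]|^2+|K^{n+1}[f(t)]|^2)$ converges uniformly on every compact interval; $\mathcal{L}_0$ is the subset of those $f$ for which this limit is $0$, and $\mathcal{L}_2=\mathcal{L}/\mathcal{L}_0$. *)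

(* Defs.v *)
From Stdlib Require Import Reals Lra.
From Coquelicot Require Import Coquelicot.
Open Scope R_scope.

(** gamma_{n-1} with the convention gamma_{-1} = 1 *)
Definition gprev (gamma : nat -> R) (n : nat) : R :=
  match n with O => 1 | S m => gamma m end.

(** shift of a coefficient sequence: coefficients of (X * p) *)
Definition cshift (c : nat -> R) (k : nat) : R :=
  match k with O => 0 | S j => c j end.

(** pair (coefficients of p_n, coefficients of p_{n+1}), coefficients indexed by
    the power of omega. Recurrence:
    gamma_n p_{n+1} = omega p_n - gamma_{n-1} p_{n-1},  p_{-1}=0, p_0=1. *)
Fixpoint pcoef_pair (gamma : nat -> R) (n : nat) : (nat -> R) * (nat -> R) :=
  match n with
  | O => ((fun k => if Nat.eqb k 0%nat then 1 else 0),
          (fun k => cshift (fun j => if Nat.eqb j 0%nat then 1 else 0) k / gamma 0%nat))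
  | S m => let (a, b) := pcoef_pair gamma m in
           (b, fun k => (cshift b k - gamma m * a k) / gamma (S m))
  end.
(* In the S m case: a = p_m, b = p_{m+1}, new = p_{m+2}
   = (omega p_{m+1} - gamma_m p_m) / gamma_{m+1}.
   In the O case: p_1 = (omega p_0 - gamma_{-1} p_{-1}) / gamma_0 = omega / gamma_0. *)

Definition pcoef (gamma : nat -> R) (n k : nat) : R := fst (pcoef_pair gamma n) k.

(** p_n(omega) (p_n has degree <= n) *)
Definition peval (gamma : nat -> R) (n : nat) (omega : R) : R :=
  sum_n (fun k => pcoef gamma n k * omega ^ k) n.

Definition smoothC (f : R -> C) : Prop :=
  forall (k : nat) (t : R),
    ex_derive_n (fun s => Re (f s)) k t /\ ex_derive_n (fun s => Im (f s)) k t.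

Definition DnC (f : R -> C) (k : nat) (t : R) : C :=
  (Derive_n (fun s => Re (f s)) k t, Derive_n (fun s => Im (f s)) k t).

(** K^n_t = (-i)^n p_n(i d/dt) *)
Definition Kop (gamma : nat -> R) (n : nat) (f : R -> C) (t : R) : C :=
  Cmult (Cpow (Copp Ci) n)
    (sum_n (fun k => Cmult (RtoC (pcoef gamma n k))
                           (Cmult (Cpow Ci k) (DnC f k t))) n).

Definition beta (gamma : nat -> R) (f : R -> C) (n : nat) (t : R) : R :=
  gamma n * ((Cmod (Kop gamma n f t)) ^ 2 + (Cmod (Kop gamma (S n) f t)) ^ 2).

Definition inL (gamma : nat -> R) (f : R -> C) : Prop :=
  smoothC f /\
  exists L : R -> R, forall a b eps : R, 0 < eps ->
    exists N : nat, forall n : nat, (N <= n)%nat ->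
      forall t : R, a <= t <= b -> Rabs (beta gamma f n t - L t) < eps.

Definition expi (omega : R) (t : R) : C := (cos (omega * t), sin (omega * t)).

Definition Delta (gamma : nat -> R) (n : nat) : R := gamma (S n) - gamma n.
Definition Delta2 (gamma : nat -> R) (n : nat) : R :=
  Delta gamma (S n) - Delta gamma n.

Definition cond_C1 (gamma : nat -> R) : Prop := is_lim_seq gamma p_infty.
Definition cond_C2 (gamma : nat -> R) : Prop := is_lim_seq (Delta gamma) 0.
Definition cond_C3 (gamma : nat -> R) : Prop :=
  exists n0 m0 : nat, forall n m : nat, (n0 <= n)%nat -> (m0 <= m)%nat ->
    gamma (n + m)%nat > gamma n.
Definition cond_C4 (gamma : nat -> R) : Prop :=
  is_lim_seq (sum_n (fun j => / gamma j)) p_infty.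
Definition cond_C5 (gamma : nat -> R) : Prop :=
  exists kappa : R, kappa > 1 /\ ex_series (fun j => Rpower (gamma j) (- kappa)).
Definition cond_C6 (gamma : nat -> R) : Prop :=
  ex_series (fun n => Rabs (Delta gamma n) / (gamma n) ^ 2).
Definition cond_C7 (gamma : nat -> R) : Prop :=
  ex_series (fun n => Rabs (Delta2 gamma n) / gamma n).

(* Main.v *)
Require Import Defs.
From Stdlib Require Import Reals Lra Lia.
From Coquelicot Require Import Coquelicot.
Open Scope R_scope.

Definition sol (gamma : nat -> R) (a : R) (x : nat -> R) : Prop :=
  x 0%nat = 1 /\ gamma 0%nat * x 1%nat = a /\
  forall n, gamma (S n) * x (S (S n)) = a * x (S n) - gamma n * x n.

Lemma P_S gamma m : pcoef gamma (S m) = snd (pcoef_pair gamma m).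
Proof. unfold pcoef. simpl. destruct (pcoef_pair gamma m). reflexivity. Qed.

Lemma Q_S gamma m k : snd (pcoef_pair gamma (S m)) k =
  (cshift (snd (pcoef_pair gamma m)) k - gamma m * pcoef gamma m k) / gamma (S m).
Proof. unfold pcoef. simpl. destruct (pcoef_pair gamma m). reflexivity. Qed.

Lemma deg gamma n : forall k, (n < k)%nat -> pcoef gamma n k = 0 /\
   ((S n < k)%nat -> snd (pcoef_pair gamma n) k = 0).
Proof.
  induction n as [|n IH]; intros k Hk.
  - split.
    + unfold pcoef; simpl. destruct k; [lia|]. reflexivity.
    + intros H. simpl. destruct k; [lia|]. destruct k; [lia|]. simpl.
      unfold Rdiv; ring.
  - split.
    + rewrite P_S. apply (IH k); lia.
    + intros H. rewrite Q_S. destruct k; [lia|]. simpl cshift.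
      rewrite (proj2 (IH k ltac:(lia)) ltac:(lia)).
      rewrite (proj1 (IH (S k) ltac:(lia))). unfold Rdiv; ring.
Qed.

Lemma sum_deg (c : nat -> R) w n N : (forall k, (n < k)%nat -> c k = 0) -> (n <= N)%nat ->
  sum_f_R0 (fun k => c k * w ^ k) N = sum_f_R0 (fun k => c k * w ^ k) n.
Proof.
  intros Hc HN. induction HN as [|m Hm IH]; [reflexivity|].
  simpl. rewrite IH, (Hc (S m)) by lia. ring.
Qed.

Lemma sum_shift (b : nat -> R) w N :
  sum_f_R0 (fun k => cshift b k * w ^ k) (S N) = w * sum_f_R0 (fun k => b k * w ^ k) N.
Proof.
  induction N as [|N IH].
  - simpl. ring.
  - change (sum_f_R0 (fun k => cshift b k * w ^ k) (S (S N))) with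
      (sum_f_R0 (fun k => cshift b k * w ^ k) (S N) + cshift b (S (S N)) * w ^ (S (S N))).
    rewrite IH. simpl. ring.
Qed.

Lemma sum_lin (u v : nat -> R) g h w N : h <> 0 ->
  sum_f_R0 (fun k => (u k - g * v k) / h * w ^ k) N =
  (sum_f_R0 (fun k => u k * w ^ k) N - g * sum_f_R0 (fun k => v k * w ^ k) N) / h.
Proof.
  intros Hh. induction N as [|N IH]; simpl.
  - field; auto.
  - rewrite IH. field; auto.
Qed.

Lemma peval_sol gamma w : (forall n, 0 < gamma n) -> sol gamma w (fun n => peval gamma n w).
Proof.
  intros Hpos. split; [|split].
  - unfold peval, pcoef. rewrite sum_O. simpl. ring.
  - unfold peval. rewrite sum_n_Reals. simpl. unfold pcoef. simpl.
    assert (gamma 0%nat <> 0) by (specialize (Hpos 0%nat); lra). field; auto.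
  - intros m. unfold peval. rewrite !sum_n_Reals.
    rewrite (sum_eq _ (fun k => (cshift (pcoef gamma (S m)) k - gamma m * pcoef gamma m k)
        / gamma (S m) * w ^ k)).
    2:{ intros i _. rewrite P_S, Q_S, <- P_S. reflexivity. }
    assert (gamma (S m) <> 0) by (specialize (Hpos (S m)); lra).
    rewrite sum_lin by auto. rewrite sum_shift.
    rewrite (sum_deg (pcoef gamma m) w m (S (S m))).
    2:{ intros k Hk. apply (deg gamma m k Hk). }
    2: lia.
    field; auto.
Qed.

Lemma exp_mono x y : x <= y -> exp x <= exp y.
Proof. intros H. destruct (Rle_lt_or_eq_dec _ _ H) as [H'|H'].
  left. apply exp_increasing; auto. rewrite H'. lra. Qed.

Lemma series_lim (a : nat -> R) : ex_series a -> is_lim_seq (sum_n a) (Series a).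
Proof. intros H. apply Series_correct in H. exact H. Qed.

Lemma partial_le (e : nat -> R) : (forall n, 0 <= e n) -> ex_series e ->
  forall n, sum_n e n <= Series e.
Proof.
  intros He Hs n.
  assert (Hm : forall k, sum_n e n <= sum_n e (n + k)).
  { induction k as [|k IH]. rewrite Nat.add_0_r. lra.
    rewrite <- plus_n_Sm, sum_Sn. change (plus ?a ?b) with (a + b). specialize (He (S (n+k))). lra. }
  pose proof (is_lim_seq_le_loc (fun _ => sum_n e n) (sum_n e) (sum_n e n) (Series e)) as H.
  simpl in H. apply H.
  - exists n. intros m Hmn. replace m with (n + (m - n))%nat by lia. apply Hm.
  - apply is_lim_seq_const.
  - apply series_lim; auto.
Qed.

Lemma AL (h b e rho : nat -> R) :
  (forall n, 0 < b n) ->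
  (forall n, Rabs (h n - b n) <= rho n * b n) ->
  (forall n, 0 <= rho n <= 1/8) ->
  is_lim_seq rho 0 ->
  (forall n, Rabs (h (S n) - h n) <= e n * (b n + b (S n))) ->
  (forall n, 0 <= e n <= 1/8) ->
  ex_series e ->
  exists l, 0 < l /\ is_lim_seq b l.
Proof.
  intros Hb Hhb Hrho Hrl Hinc He Hes.
  assert (Hhb' : forall n, 7/8 * b n <= h n <= 9/8 * b n).
  { intros n. specialize (Hhb n). specialize (Hrho n). specialize (Hb n).
    apply Rabs_le_between in Hhb. nra. }
  assert (Hh : forall n, 0 < h n). { intros n. specialize (Hhb' n). specialize (Hb n). lra. }
  assert (Hstep : forall n, Rabs (h (S n) - h n) <= 2 * e n * (h n + h (S n))).
  { intros n. eapply Rle_trans. apply Hinc. pose proof (Hhb' n). pose proof (Hhb' (S n)).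
    specialize (He n). nra. }
  assert (Hup : forall n, h (S n) <= h n * exp (8 * e n)).
  { intros n. pose proof (exp_ineq1_le (8 * e n)). specialize (Hstep n).
    apply Rabs_le_between in Hstep. specialize (He n). pose proof (Hh n). pose proof (Hh (S n)).
    assert (h (S n) <= h n * (1 + 8 * e n)) by nra. nra. }
  assert (Hdown : forall n, h n <= h (S n) * exp (8 * e n)).
  { intros n. pose proof (exp_ineq1_le (8 * e n)). specialize (Hstep n).
    apply Rabs_le_between in Hstep. specialize (He n). pose proof (Hh n). pose proof (Hh (S n)).
    assert (h n <= h (S n) * (1 + 8 * e n)) by nra. nra. }
  set (E := Series e).
  assert (HP : forall n, sum_n e n <= E) by (apply partial_le; auto; intros; apply He).
  assert (HP0 : forall n, 0 <= sum_n e n).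
  { induction n. rewrite sum_O. apply He. rewrite sum_Sn. change (plus ?a ?b) with (a+b).
    pose proof (He (S n)). lra. }
  assert (HE : 0 <= E) by (pose proof (HP 0%nat); pose proof (HP0 0%nat); lra).
  assert (Hb1 : forall m, h (S m) <= h 0%nat * exp (8 * sum_n e m) /\
                          h 0%nat <= h (S m) * exp (8 * sum_n e m)).
  { induction m as [|m [IH1 IH2]].
    - rewrite sum_O. split; auto.
    - rewrite sum_Sn. change (plus ?a ?b) with (a+b).
      replace (8 * (sum_n e m + e (S m))) with (8 * sum_n e m + 8 * e (S m)) by ring.
      rewrite exp_plus. pose proof (Hup (S m)). pose proof (Hdown (S m)).
      pose proof (exp_pos (8 * sum_n e m)). pose proof (exp_pos (8 * e (S m))).
      pose proof (Hh 0%nat). pose proof (Hh (S m)). pose proof (Hh (S (S m))).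
      split; nra. }
  set (B := h 0%nat * exp (8 * E)).
  set (c := h 0%nat * exp (- (8 * E))).
  assert (HB : forall n, h n <= B).
  { intros [|m]. unfold B. pose proof (exp_mono 0 (8 * E) ltac:(lra)). rewrite exp_0 in H.
    pose proof (Hh 0%nat). nra.
    destruct (Hb1 m) as [H1 _]. unfold B. pose proof (exp_mono _ _ (Rmult_le_compat_l 8 _ _ ltac:(lra) (HP m))).
    pose proof (Hh 0%nat). eapply Rle_trans; [exact H1|]. apply Rmult_le_compat_l; lra. }
  assert (Hc : forall n, c <= h n).
  { intros [|m]; unfold c.
    - pose proof (exp_mono (- (8 * E)) 0 ltac:(lra)). rewrite exp_0 in H. pose proof (Hh 0%nat). nra.
    - destruct (Hb1 m) as [_ H2].
      pose proof (exp_mono (- (8 * E)) (- (8 * sum_n e m)) ltac:(pose proof (HP m); lra)).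
      rewrite !exp_Ropp in H |- *. rewrite (exp_Ropp (8 * sum_n e m)) in H.
      pose proof (exp_pos (8 * sum_n e m)). pose proof (exp_pos (8 * E)).
      assert (h 0%nat * / exp (8 * sum_n e m) <= h (S m)).
      { apply (Rmult_le_reg_r (exp (8 * sum_n e m))); auto.
        rewrite Rmult_assoc, Rinv_l by lra. lra. }
      pose proof (Hh 0%nat). eapply Rle_trans; [|exact H3].
      apply Rmult_le_compat_l; lra. }
  assert (Hcpos : 0 < c) by (unfold c; pose proof (Hh 0%nat); pose proof (exp_pos (- (8*E))); nra).
  set (d := fun k => h (S k) - h k).
  assert (Hd : ex_series d).
  { apply ex_series_Rabs. apply (@ex_series_le R_AbsRing R_CompleteNormedModule _ (fun n => scal (4 * B) (e n))).
    - intros n. change (norm (Rabs (d n))) with (Rabs (Rabs (d n))). rewrite Rabs_Rabsolu.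
      unfold d. eapply Rle_trans. apply Hstep. change (scal (4*B) (e n)) with (4 * B * e n).
      pose proof (HB n). pose proof (HB (S n)). pose proof (He n). nra.
    - apply (@ex_series_scal_l R_AbsRing R_NormedModule). auto. }
  assert (Htel : forall n, h (S n) = h 0%nat + sum_n d n).
  { induction n. rewrite sum_O. unfold d. ring.
    rewrite sum_Sn. change (plus ?a ?b) with (a+b). rewrite <- Rplus_assoc, <- IHn. unfold d. ring. }
  set (L := h 0%nat + Series d).
  assert (HhL : is_lim_seq h L).
  { apply is_lim_seq_incr_1. apply (is_lim_seq_ext (fun n => h 0%nat + sum_n d n)).
    intros; symmetry; apply Htel.
    apply is_lim_seq_plus'. apply is_lim_seq_const. apply series_lim; auto. }
  assert (HLc : c <= L).
  { pose proof (is_lim_seq_le (fun _ => c) h c L Hc (is_lim_seq_const c) HhL). simpl in H. auto. }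
  exists L. split. lra.
  assert (Hdiff : is_lim_seq (fun n => h n - b n) 0).
  { apply (is_lim_seq_le_le (fun n => - (8/7 * B) * rho n) _ (fun n => (8/7 * B) * rho n)).
    - intros n. specialize (Hhb n). apply Rabs_le_between in Hhb.
      pose proof (HB n). pose proof (Hhb' n). pose proof (Hrho n). pose proof (Hb n). split; nra.
    - replace (Finite 0) with (Rbar_mult (- (8/7*B)) 0) by (simpl; f_equal; ring).
      apply is_lim_seq_scal_l; auto.
    - replace (Finite 0) with (Rbar_mult (8/7*B) 0) by (simpl; f_equal; ring).
      apply is_lim_seq_scal_l; auto. }
  apply (is_lim_seq_ext (fun n => h n - (h n - b n))). intros; ring.
  replace L with (L - 0) by ring. apply is_lim_seq_minus'; auto.
Qed.

Lemma absprod u v : Rabs u * Rabs v <= (u * u + v * v) / 2.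
Proof.
  pose proof (Rabs_pos u). pose proof (Rabs_pos v).
  assert (Rabs u * Rabs u = u * u) by (rewrite <- Rabs_mult; apply Rabs_pos_eq; nra).
  assert (Rabs v * Rabs v = v * v) by (rewrite <- Rabs_mult; apply Rabs_pos_eq; nra).
  pose proof (pow2_ge_0 (Rabs u - Rabs v)). simpl in *. lra.
Qed.

Lemma incr_bound a g0 g1 g2 x0 x1 x2 :
  2 <= g0 -> Rabs (g1 - g0) <= 1 -> g1 * x2 = a * x1 - g0 * x0 ->
  Rabs ((g1 * (x1^2 + x2^2) - a * x1 * x2 + /2 * (g2 - g1) * (x2^2 - x1^2))
      - (g0 * (x0^2 + x1^2) - a * x0 * x1 + /2 * (g1 - g0) * (x1^2 - x0^2)))
  <= (8 * (Rabs a + 1) * Rabs (g1 - g0) / g0 ^ 2 + 2 * Rabs ((g2 - g1) - (g1 - g0)) / g0)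
     * (g0 * (x0^2 + x1^2) + g1 * (x1^2 + x2^2)).
Proof.
  intros Hg0 HD Hrec.
  assert (Hg1 : g0 / 2 <= g1) by (apply Rabs_le_between in HD; lra).
  assert (Hg1p : 0 < g1) by lra.
  set (D0 := g1 - g0) in *. set (D2 := (g2 - g1) - (g1 - g0)).
  set (T1 := (D0 * D0) * (x0 * x0) * / g1).
  set (T2 := a * D0 * (x0 * x1) * / g1).
  set (T3 := /2 * D0 * (x2 - x0) * (a * x1 + D0 * x0) * / g1).
  set (T4 := /2 * D2 * (x2 * x2 - x1 * x1)).
  match goal with |- Rabs ?e <= _ => replace e with (T1 + T2 + T3 + T4) end.
  2:{ assert (Hx2 : x2 = (a * x1 - g0 * x0) / g1) by (field_simplify_eq; lra).
    unfold T1, T2, T3, T4, D2, D0. rewrite Hx2. field. lra. }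
  set (M := x0 * x0 + x1 * x1 + x2 * x2).
  set (A := Rabs a). set (d := Rabs D0).
  set (X0 := Rabs x0). set (X1 := Rabs x1). set (X2 := Rabs x2).
  assert (HA : 0 <= A) by apply Rabs_pos. assert (Hd : 0 <= d) by apply Rabs_pos.
  assert (Hd1 : d <= 1) by exact HD.
  assert (HX0 : 0 <= X0) by apply Rabs_pos. assert (HX1 : 0 <= X1) by apply Rabs_pos.
  assert (HX2 : 0 <= X2) by apply Rabs_pos.
  pose proof (absprod x0 x1) as P01. pose proof (absprod x0 x2) as P02.
  pose proof (absprod x1 x2) as P12. pose proof (absprod x0 x0) as P00.
  pose proof (absprod x1 x1) as P11. pose proof (absprod x2 x2) as P22.
  fold X0 X1 X2 in P01, P02, P12, P00, P11, P22.
  pose proof (Rle_0_sqr x0) as S0; pose proof (Rle_0_sqr x1) as S1; pose proof (Rle_0_sqr x2) as S2.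
  unfold Rsqr in S0, S1, S2.
  assert (Hx0M : x0 * x0 <= M) by (unfold M; lra).
  assert (Hig1 : 0 < / g1) by (apply Rinv_0_lt_compat; lra).
  assert (HT1 : Rabs T1 <= d * M * / g1).
  { unfold T1. rewrite !Rabs_mult, (Rabs_pos_eq (/g1)) by lra. fold d.
    rewrite <- Rabs_mult, Rabs_pos_eq by nra.
    assert (d * d <= d) by nra. apply Rmult_le_compat_r; [lra|]. nra. }
  assert (HT2 : Rabs T2 <= A * d * M * / g1).
  { unfold T2. rewrite !Rabs_mult, (Rabs_pos_eq (/g1)) by lra. fold A d X0 X1.
    apply Rmult_le_compat_r; [lra|]. apply Rmult_le_compat_l; [nra|].
    pose proof (Rle_0_sqr x0); pose proof (Rle_0_sqr x1); pose proof (Rle_0_sqr x2); unfold Rsqr in *. unfold M; lra. }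
  assert (HT3 : Rabs T3 <= d * (A + 1) * M * / g1).
  { unfold T3. rewrite !Rabs_mult, (Rabs_pos_eq (/g1)) by lra. fold d.
    rewrite (Rabs_pos_eq (/2)) by lra.
    assert (Ha : Rabs (x2 - x0) <= X2 + X0).
    { unfold Rminus. eapply Rle_trans. apply Rabs_triang. rewrite Rabs_Ropp. fold X0 X2. lra. }
    assert (Hb : Rabs (a * x1 + D0 * x0) <= A * X1 + X0).
    { eapply Rle_trans. apply Rabs_triang. rewrite !Rabs_mult. fold A X1 d X0.
      pose proof (Rmult_le_compat_r X0 d 1 HX0 Hd1). lra. }
    assert (Hc : (X2 + X0) * (A * X1 + X0) <= 2 * (A + 1) * M).
    { unfold M. nra. }
    pose proof (Rabs_pos (x2 - x0)). pose proof (Rabs_pos (a * x1 + D0 * x0)).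
    assert (Rabs (x2 - x0) * Rabs (a * x1 + D0 * x0) <= 2 * (A + 1) * M).
    { eapply Rle_trans; [|exact Hc]. apply Rmult_le_compat; auto. }
    apply Rmult_le_compat_r; [lra|]. nra. }
  assert (HT4 : Rabs T4 <= /2 * Rabs D2 * M).
  { unfold T4. rewrite !Rabs_mult. rewrite (Rabs_pos_eq (/2)) by lra.
    apply Rmult_le_compat_l. pose proof (Rabs_pos D2). lra.
    apply Rabs_le. unfold M. nra. }
  assert (Htot : Rabs (T1 + T2 + T3 + T4) <= (d * (2 * A + 2) * / g1 + Rabs D2) * M).
  { eapply Rle_trans. apply Rabs_triang. eapply Rle_trans. apply Rplus_le_compat_r. apply Rabs_triang.
    eapply Rle_trans. apply Rplus_le_compat_r. apply Rplus_le_compat_r. apply Rabs_triang.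
    pose proof (Rabs_pos D2). assert (0 <= M) by (unfold M; nra). nra. }
  eapply Rle_trans; [exact Htot|].
  assert (Hig : / g1 <= 2 / g0).
  { apply (Rmult_le_reg_r g1); auto. rewrite Rinv_l by lra.
    apply (Rmult_le_reg_r g0); [lra|]. unfold Rdiv. field_simplify; lra. }
  assert (HM : M <= 2 / g0 * (g0 * (x0^2 + x1^2) + g1 * (x1^2 + x2^2))).
  { unfold Rdiv. replace (2 * / g0 * (g0 * (x0 ^ 2 + x1 ^ 2) + g1 * (x1 ^ 2 + x2 ^ 2)))
      with (2 * (x0 ^ 2 + x1 ^ 2) + (2 * g1 / g0) * (x1^2 + x2^2)) by (field; lra).
    assert (1 <= 2 * g1 / g0).
    { apply (Rmult_le_reg_r g0); [lra|]. unfold Rdiv. field_simplify; lra. }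
    unfold M. nra. }
  assert (HM0 : 0 <= M) by (unfold M; nra).
  set (Bt := g0 * (x0^2 + x1^2) + g1 * (x1^2 + x2^2)) in *.
  assert (HBt : 0 <= Bt) by (unfold Bt; nra).
  pose proof (Rabs_pos D2) as HD2.
  assert (Hig0 : 0 < / g0) by (apply Rinv_0_lt_compat; lra).
  assert (E1 : (d * (2 * A + 2) * / g1 + Rabs D2) * M <= (d * (2 * A + 2) * (2 / g0) + Rabs D2) * (2 / g0 * Bt)).
  { apply Rmult_le_compat; auto.
    - apply Rplus_le_le_0_compat; auto. apply Rmult_le_pos; [nra|lra].
    - apply Rplus_le_compat_r. apply Rmult_le_compat_l; [nra|auto]. }
  eapply Rle_trans; [exact E1|]. right. fold d A. change (Rabs (g2 - g1 - D0)) with (Rabs D2). unfold Rdiv. field. lra.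
Qed.

Definition zk (w : R) (k : nat) : C := Cpow (Cmult Ci (RtoC w)) k.

Lemma zk_S w k : zk w (S k) = (- w * Im (zk w k), w * Re (zk w k)).
Proof. unfold zk. simpl. destruct (Cpow (Ci * RtoC w)%C k) as [p q].
  unfold Cmult, Ci, RtoC; simpl. f_equal; ring. Qed.

Lemma Dre w k : forall t, Derive_n (fun s => Re (expi w s)) k t =
  Re (zk w k) * cos (w * t) - Im (zk w k) * sin (w * t).
Proof.
  induction k as [|k IH]; intros t.
  - simpl. unfold zk; simpl. ring.
  - simpl Derive_n. rewrite (Derive_ext _ _ _ IH).
    rewrite zk_S. simpl.
    apply is_derive_unique. auto_derive; auto. ring.
Qed.

Lemma Dim w k : forall t, Derive_n (fun s => Im (expi w s)) k t =
  Im (zk w k) * cos (w * t) + Re (zk w k) * sin (w * t).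
Proof.
  induction k as [|k IH]; intros t.
  - simpl. unfold zk; simpl. ring.
  - simpl Derive_n. rewrite (Derive_ext _ _ _ IH).
    rewrite zk_S. simpl.
    apply is_derive_unique. auto_derive; auto. ring.
Qed.

Lemma smooth_expi w : smoothC (expi w).
Proof.
  intros k t. destruct k as [|k]; split; simpl; auto.
  - eapply ex_derive_ext. intros s. symmetry. apply Dre. auto_derive; auto.
  - eapply ex_derive_ext. intros s. symmetry. apply Dim. auto_derive; auto.
Qed.

Lemma DnC_expi w k t : DnC (expi w) k t = Cmult (zk w k) (expi w t).
Proof.
  unfold DnC. rewrite Dre, Dim. destruct (zk w k) as [p q].
  unfold Cmult, expi, Re, Im. simpl. f_equal; ring.
Qed.

Lemma Ci_zk w k : Cmult (Cpow Ci k) (zk w k) = RtoC ((- w) ^ k).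
Proof.
  induction k as [|k IH].
  - simpl. unfold zk. simpl. ring.
  - unfold zk in *. simpl Cpow. simpl pow.
    rewrite RtoC_mult, <- IH.
    replace (RtoC (-w)) with (Cmult Ci (Cmult Ci (RtoC w))).
    + ring.
    + unfold Cmult, Ci, RtoC. simpl. f_equal; ring.
Qed.

Lemma sum_expi (c : nat -> R) w t N :
  sum_n (fun k => Cmult (RtoC (c k)) (Cmult (Cpow Ci k) (DnC (expi w) k t))) N =
  Cmult (RtoC (sum_n (fun k => c k * (- w) ^ k) N)) (expi w t).
Proof.
  induction N as [|N IH].
  - rewrite !sum_O. rewrite DnC_expi.
    rewrite RtoC_mult, <- Ci_zk. match goal with |- ?a = ?b => change (@eq C a b) end. ring.
  - rewrite !sum_Sn. rewrite IH. rewrite DnC_expi.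
    change (plus (sum_n (fun k : nat => c k * (- w) ^ k) N) (c (S N) * (- w) ^ S N))
      with (sum_n (fun k : nat => c k * (- w) ^ k) N + c (S N) * (- w) ^ S N).
    rewrite RtoC_plus, RtoC_mult, <- Ci_zk.
    change (plus ?a ?b) with (Cplus a b).
    match goal with |- ?a = ?b => change (@eq C a b) end. ring.
Qed.

Lemma Kop_expi gamma n w t :
  Kop gamma n (expi w) t = Cmult (Cpow (Copp Ci) n)
     (Cmult (RtoC (peval gamma n (- w))) (expi w t)).
Proof. unfold Kop, peval. rewrite sum_expi. reflexivity. Qed.

Lemma Cmod_expi w t : Cmod (expi w t) = 1.
Proof. unfold Cmod, expi. simpl.
  pose proof (sin2_cos2 (w * t)). unfold Rsqr in H.
  match goal with |- sqrt ?a = 1 => replace a with (sin (w * t) * sin (w * t) + cos (w * t) * cos (w * t)) by ring end.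
  rewrite H. apply sqrt_1. Qed.

Lemma Cmod_mi : Cmod (Copp Ci) = 1.
Proof. unfold Cmod, Copp, Ci. simpl.
  match goal with |- sqrt ?a = 1 => replace a with 1 by ring end. apply sqrt_1. Qed.

Lemma Cmod_Kop gamma n w t : Cmod (Kop gamma n (expi w) t) = Rabs (peval gamma n (- w)).
Proof.
  rewrite Kop_expi, !Cmod_mult, Cmod_pow, Cmod_expi, Cmod_R, Cmod_mi, pow1. ring.
Qed.

Lemma beta_expi gamma w n t : beta gamma (expi w) n t =
  gamma n * (peval gamma n (- w) ^ 2 + peval gamma (S n) (- w) ^ 2).
Proof. unfold beta. rewrite !Cmod_Kop. rewrite <- (pow2_abs (peval gamma n (- w))).
  rewrite <- (pow2_abs (peval gamma (S n) (- w))). reflexivity. Qed.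

Lemma conj_expi s : (fun t => Cconj (expi s t)) = expi (- s).
Proof.
  apply FunctionalExtensionality.functional_extensionality. intros t.
  unfold Cconj, expi. simpl. replace (- s * t) with (- (s * t)) by ring.
  rewrite cos_neg, sin_neg. reflexivity.
Qed.

Lemma sol_nz gamma a x : (forall n, 0 < gamma n) -> sol gamma a x ->
  forall n, 0 < x n ^ 2 + x (S n) ^ 2.
Proof.
  intros Hpos [H0 [H1 H2]].
  assert (Hn : forall n, x n <> 0 \/ x (S n) <> 0).
  { induction n as [|n IH]. left. rewrite H0. lra.
    destruct (Req_dec (x (S n)) 0) as [E|E]; [|left; auto].
    right. intros E2. specialize (H2 n). rewrite E, E2 in H2.
    destruct IH as [IH|IH]; [|contradiction].
    apply IH. specialize (Hpos n).
    assert (gamma n * x n = 0) by lra.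
    apply Rmult_integral in H. destruct H; auto. lra. }
  intros n. destruct (Hn n) as [E|E].
  - pose proof (Rle_0_sqr (x (S n))). unfold Rsqr in *. simpl.
    assert (0 < x n * x n) by (apply Rsqr_pos_lt; auto). lra.
  - pose proof (Rle_0_sqr (x n)). unfold Rsqr in *. simpl.
    assert (0 < x (S n) * x (S n)) by (apply Rsqr_pos_lt; auto). lra.
Qed.

Lemma hb_bound a g x0 x1 D : 0 < g ->
  Rabs ((g * (x0^2 + x1^2) - a * x0 * x1 + /2 * D * (x1^2 - x0^2)) - g * (x0^2 + x1^2))
  <= (Rabs a + Rabs D) / (2 * g) * (g * (x0^2 + x1^2)).
Proof.
  intros Hg.
  replace ((g * (x0^2 + x1^2) - a * x0 * x1 + /2 * D * (x1^2 - x0^2)) - g * (x0^2 + x1^2))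
    with (- (a * (x0 * x1)) + /2 * D * (x1 * x1 - x0 * x0)) by ring.
  replace ((Rabs a + Rabs D) / (2 * g) * (g * (x0^2 + x1^2))) with
    (Rabs a * ((x0 * x0 + x1 * x1)/2) + /2 * Rabs D * (x0 * x0 + x1 * x1)) by (field; lra).
  eapply Rle_trans. apply Rabs_triang. rewrite Rabs_Ropp.
  pose proof (Rle_0_sqr x0); pose proof (Rle_0_sqr x1). unfold Rsqr in *.
  apply Rplus_le_compat.
  - rewrite !Rabs_mult. apply Rmult_le_compat_l. apply Rabs_pos. apply absprod.
  - rewrite !Rabs_mult. rewrite (Rabs_pos_eq (/2)) by lra. apply Rmult_le_compat_l.
    pose proof (Rabs_pos D). lra. apply Rabs_le. lra.
Qed.

Definition Hq (gamma : nat -> R) (a : R) (x : nat -> R) (n : nat) :=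
  gamma n * (x n ^ 2 + x (S n) ^ 2) - a * x n * x (S n)
  + /2 * (gamma (S n) - gamma n) * (x (S n) ^ 2 - x n ^ 2).
Definition bq (gamma x : nat -> R) (n : nat) := gamma n * (x n ^ 2 + x (S n) ^ 2).
Definition etaq (gamma : nat -> R) (a : R) (n : nat) :=
  8 * (Rabs a + 1) * Rabs (Defs.Delta gamma n) / gamma n ^ 2 + 2 * Rabs (Delta2 gamma n) / gamma n.
Definition rhoq (gamma : nat -> R) (a : R) (n : nat) := (Rabs a + Rabs (Defs.Delta gamma n)) / (2 * gamma n).

Lemma core gamma a x : (forall n, 0 < gamma n) -> cond_C1 gamma -> cond_C2 gamma ->
  cond_C6 gamma -> cond_C7 gamma -> sol gamma a x ->
  exists l, 0 < l /\ is_lim_seq (fun n => gamma n * (x n ^ 2 + x (S n) ^ 2)) l.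
Proof.
  intros Hpos H1 H2 H6 H7 Hs.
  assert (Hes : ex_series (etaq gamma a)).
  { apply (ex_series_ext (fun n => plus (scal (8 * (Rabs a + 1)) (Rabs (Defs.Delta gamma n) / gamma n ^ 2))
                                       (scal 2 (Rabs (Delta2 gamma n) / gamma n)))).
    - intros n. unfold etaq. change (plus ?u ?v) with (u + v). change (scal ?u ?v) with (u * v).
      match goal with |- ?u = ?v => change (@eq R u v) end. unfold Rdiv. ring.
    - apply (@ex_series_plus R_AbsRing R_NormedModule); apply (@ex_series_scal_l R_AbsRing R_NormedModule); auto. }
  assert (Hel : is_lim_seq (etaq gamma a) 0) by (apply ex_series_lim_0; auto).
  assert (Hrl : is_lim_seq (rhoq gamma a) 0).
  { apply (is_lim_seq_ext (fun n => (Rabs a + Rabs (Defs.Delta gamma n)) * (/2 * / gamma n))).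
    - intros n. unfold rhoq. field. specialize (Hpos n). lra.
    - replace 0 with ((Rabs a + 0) * (/2 * 0)) by ring.
      apply is_lim_seq_mult'.
      + apply is_lim_seq_plus'. apply is_lim_seq_const.
        replace 0 with (Rabs 0) by apply Rabs_R0.
        apply (is_lim_seq_abs _ 0). exact H2.
      + apply is_lim_seq_mult'. apply is_lim_seq_const.
        pose proof (is_lim_seq_inv gamma p_infty H1 ltac:(discriminate)). exact H. }
  set (M0 := 4 * (Rabs a + 1) + 2).
  assert (Hev : eventually (fun n => M0 < gamma n /\ Rabs (Defs.Delta gamma n) < 1 /\
                                     Rabs (etaq gamma a n) < 1/8)).
  { apply filter_and.
    - apply is_lim_seq_spec in H1. apply H1.
    - apply filter_and.
      + apply is_lim_seq_spec in H2. specialize (H2 (mkposreal 1 Rlt_0_1)).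
        eapply filter_imp; [|exact H2]. intros n. simpl. rewrite Rminus_0_r. auto.
      + apply is_lim_seq_spec in Hel. assert (Hp : 0 < 1/8) by lra.
        specialize (Hel (mkposreal _ Hp)).
        eapply filter_imp; [|exact Hel]. intros n. simpl. rewrite Rminus_0_r. auto. }
  destruct Hev as [N HN].
  destruct Hs as [Hs0 [Hs1 Hs2]].
  assert (Hs' : sol gamma a x) by (split; auto).
  pose proof (sol_nz gamma a x Hpos Hs') as Hnz.
  destruct (AL (fun n => Hq gamma a x (n + N)) (fun n => bq gamma x (n + N))
               (fun n => etaq gamma a (n + N)) (fun n => rhoq gamma a (n + N))) as [l [Hl Hlim]].
  - intros n. unfold bq. apply Rmult_lt_0_compat; auto.
  - intros n. unfold Hq, bq, rhoq. apply hb_bound; auto.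
  - intros n. destruct (HN (n + N)%nat ltac:(lia)) as [Hg [HD _]]. unfold rhoq.
    pose proof (Rabs_pos a). pose proof (Rabs_pos (Defs.Delta gamma (n + N))).
    unfold M0 in Hg. split.
    + apply Rmult_le_pos; [lra|]. left. apply Rinv_0_lt_compat. lra.
    + apply (Rmult_le_reg_r (2 * gamma (n + N)%nat)); [lra|].
      unfold Rdiv. rewrite Rmult_assoc, Rinv_l by lra. lra.
  - exact (proj1 (is_lim_seq_incr_n _ N _) Hrl).
  - intros n. destruct (HN (n + N)%nat ltac:(lia)) as [Hg [HD _]].
    unfold Hq, bq, etaq, Delta2, Defs.Delta. simpl (S n + N)%nat.
    unfold Defs.Delta in HD. unfold M0 in Hg. pose proof (Rabs_pos a).
    apply incr_bound; try lra. apply Hs2.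
  - intros n. destruct (HN (n + N)%nat ltac:(lia)) as [Hg [_ He]].
    apply Rabs_lt_between in He. split; [|lra].
    unfold etaq. pose proof (Hpos (n + N)%nat).
    pose proof (Rabs_pos a). pose proof (Rabs_pos (Defs.Delta gamma (n + N))).
    pose proof (Rabs_pos (Delta2 gamma (n + N))).
    apply Rplus_le_le_0_compat; unfold Rdiv; apply Rmult_le_pos;
      try (left; apply Rinv_0_lt_compat; try apply pow_lt; lra).
    repeat apply Rmult_le_pos; lra. lra.
  - apply (proj1 (ex_series_incr_n _ N)) in Hes.
    apply (ex_series_ext (fun k => etaq gamma a (N + k))); auto.
    intros n. rewrite Nat.add_comm. reflexivity.
  - exists l. split; auto. exact (proj2 (is_lim_seq_incr_n _ N _) Hlim).
Qed.

Lemma CD gamma a c x z : sol gamma a x -> sol gamma c z -> forall n,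
  (a - c) * sum_n (fun k => x k * z k) n = gamma n * (x (S n) * z n - x n * z (S n)).
Proof.
  intros [X0 [X1 X2]] [Z0 [Z1 Z2]]. induction n as [|n IH].
  - rewrite sum_O. rewrite X0, Z0. replace (gamma 0%nat * (x 1%nat * 1 - 1 * z 1%nat))
      with (gamma 0%nat * x 1%nat - gamma 0%nat * z 1%nat) by ring. rewrite X1, Z1. ring.
  - rewrite sum_Sn. change (plus ?u ?v) with (u + v).
    rewrite Rmult_plus_distr_l, IH.
    replace (gamma (S n) * (x (S (S n)) * z (S n) - x (S n) * z (S (S n))))
      with ((gamma (S n) * x (S (S n))) * z (S n) - x (S n) * (gamma (S n) * z (S (S n)))) by ring.
    rewrite X2, Z2. ring.
Qed.

Lemma sol_alt gamma s y : sol gamma s y -> sol gamma (- s) (fun k => (-1) ^ k * y k).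
Proof.
  intros [Y0 [Y1 Y2]]. split; [|split].
  - simpl. rewrite Y0. ring.
  - simpl. replace (gamma 0%nat * (-1 * 1 * y 1%nat)) with (- (gamma 0%nat * y 1%nat)) by ring.
    rewrite Y1. ring.
  - intros n. simpl pow.
    replace (gamma (S n) * (-1 * (-1 * (-1) ^ n) * y (S (S n)))) with
      ((-1) ^ n * (gamma (S n) * y (S (S n)))) by ring.
    rewrite Y2. ring.
Qed.

Lemma mi_sq k : Cmult (Cpow (Copp Ci) k) (Cpow (Copp Ci) k) = RtoC ((-1) ^ k).
Proof.
  induction k as [|k IH].
  - simpl. match goal with |- ?u = ?v => change (@eq C u v) end. ring.
  - simpl Cpow. simpl pow. rewrite RtoC_mult, <- IH.
    replace (RtoC (-1)) with (Cmult (Copp Ci) (Copp Ci)).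
    + ring.
    + unfold Cmult, Copp, Ci, RtoC. simpl. f_equal; ring.
Qed.

Lemma sum_RtoC (u : nat -> R) (E : C) n :
  sum_n (fun k => Cmult (RtoC (u k)) E) n = Cmult (RtoC (sum_n u n)) E.
Proof.
  induction n as [|n IH].
  - rewrite !sum_O. reflexivity.
  - rewrite !sum_Sn, IH. change (plus (sum_n u n) (u (S n))) with (sum_n u n + u (S n)).
    rewrite RtoC_plus. change (plus ?a ?b) with (Cplus a b).
    match goal with |- ?a = ?b => change (@eq C a b) end. ring.
Qed.

Lemma sumpos gamma : (forall n, 0 < gamma n) -> forall n, 0 < sum_n (fun j => / gamma j) n.
Proof.
  intros Hp. induction n. rewrite sum_O. apply Rinv_0_lt_compat; auto.
  rewrite sum_Sn. change (plus ?a ?b) with (a + b). pose proof (Rinv_0_lt_compat _ (Hp (S n))). lra.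
Qed.

Lemma ballC (z : C) eps : Cmod z < eps -> ball (RtoC 0) eps z.
Proof.
  intros. apply (@norm_compat1 C_AbsRing C_NormedModule).
  change (norm (minus z (RtoC 0))) with (Cmod (Cminus z (RtoC 0))).
  replace (Cminus z (RtoC 0)) with z. auto. ring.
Qed.

Lemma cd_bound g x0 x1 z0 z1 : 0 < g ->
  Rabs (g * (x1 * z0 - x0 * z1)) <= (g * (x0 ^ 2 + x1 ^ 2) + g * (z0 ^ 2 + z1 ^ 2)) / 2.
Proof.
  intros Hg. rewrite Rabs_mult, (Rabs_pos_eq g) by lra.
  pose proof (absprod x1 z0). pose proof (absprod x0 z1).
  assert (Rabs (x1 * z0 - x0 * z1) <= Rabs x1 * Rabs z0 + Rabs x0 * Rabs z1).
  { unfold Rminus. eapply Rle_trans. apply Rabs_triang. rewrite Rabs_Ropp, !Rabs_mult. lra. }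
  replace ((g * (x0 ^ 2 + x1 ^ 2) + g * (z0 ^ 2 + z1 ^ 2)) / 2) with
    (g * ((x1 * x1 + z0 * z0) / 2 + (x0 * x0 + z1 * z1) / 2)) by (field).
  apply Rmult_le_compat_l; lra.
Qed.

Theorem theorem32 (gamma : nat -> R)
  (Hpos : forall n : nat, 0 < gamma n)
  (H1 : cond_C1 gamma) (H2 : cond_C2 gamma) (H3 : cond_C3 gamma) (H4 : cond_C4 gamma)
  (H5 : cond_C5 gamma) (H6 : cond_C6 gamma) (H7 : cond_C7 gamma) :
  (forall omega : R,
     inL gamma (expi omega) /\
     forall t : R, exists l : R, 0 < l /\
       is_lim_seq (fun n => beta gamma (expi omega) n t) l) /\
  (forall omega sigma : R, omega <> sigma -> forall t : R,
     filterlim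
       (fun n : nat =>
          Cmult (sum_n (fun k => Cmult (Kop gamma k (expi omega) t)
                                       (Kop gamma k (fun s => Cconj (expi sigma s)) t)) n)
                (RtoC (/ sum_n (fun j => / gamma j) n)))
       eventually (locally (RtoC 0))).
Proof.
  split.
  - intros w.
    destruct (core gamma (- w) (fun n => peval gamma n (- w)) Hpos H1 H2 H6 H7
                (peval_sol gamma (- w) Hpos)) as [l [Hl Hlim]].
    assert (Hb : forall t, is_lim_seq (fun n => beta gamma (expi w) n t) l).
    { intros t. eapply is_lim_seq_ext; [|exact Hlim]. intros n. simpl.
      rewrite beta_expi. reflexivity. }
    split.
    + split. apply smooth_expi.
      exists (fun _ => l). intros a b eps Heps.
      pose proof (proj2 (is_lim_seq_spec _ _) (Hb 0)) as Hs. simpl in Hs.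
      destruct (Hs (mkposreal eps Heps)) as [N HN].
      exists N. intros n Hn t _. specialize (HN n Hn). simpl in HN.
      rewrite !beta_expi in *. exact HN.
    + intros t. exists l. split; auto.
  - intros w s Hne t.
    rewrite conj_expi.
    set (x := fun n => peval gamma n (- w)).
    set (y := fun n => peval gamma n s).
    set (z := fun k => (-1) ^ k * y k).
    assert (Sx : sol gamma (- w) x) by apply peval_sol, Hpos.
    assert (Sy : sol gamma s y) by apply peval_sol, Hpos.
    assert (Sz : sol gamma (- s) z) by (apply sol_alt; auto).
    set (E := Cmult (expi w t) (expi (- s) t)).
    assert (Hterm : forall k, Cmult (Kop gamma k (expi w) t) (Kop gamma k (expi (- s)) t)
                     = Cmult (RtoC (x k * z k)) E).
    { intros k. rewrite !Kop_expi. rewrite Ropp_involutive.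
      unfold x, z, y, E. rewrite !RtoC_mult, <- mi_sq.
      match goal with |- ?u = ?v => change (@eq C u v) end. ring. }
    apply (filterlim_ext (fun n => Cmult (Cmult (RtoC (sum_n (fun k => x k * z k) n)) E)
                                   (RtoC (/ sum_n (fun j => / gamma j) n)))).
    { intros n. f_equal. rewrite <- sum_RtoC. apply sum_n_ext. intros k. symmetry. apply Hterm. }
    destruct (core gamma (- w) x Hpos H1 H2 H6 H7 Sx) as [lx [Hlx Hx]].
    destruct (core gamma s y Hpos H1 H2 H6 H7 Sy) as [ly [Hly Hy]].
    assert (Hsw : 0 < Rabs (s - w)) by (apply Rabs_pos_lt; lra).
    set (K := (lx + 1 + (ly + 1)) / (2 * Rabs (s - w))).
    assert (HT : is_lim_seq (fun n => / sum_n (fun j => / gamma j) n) 0).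
    { pose proof (is_lim_seq_inv _ p_infty H4 ltac:(discriminate)). exact H. }
    assert (Hev : eventually (fun n => Rabs (sum_n (fun k => x k * z k) n) <= K)).
    { apply is_lim_seq_spec in Hx. apply is_lim_seq_spec in Hy.
      specialize (Hx (mkposreal 1 Rlt_0_1)). specialize (Hy (mkposreal 1 Rlt_0_1)).
      eapply filter_imp; [|exact (filter_and _ _ Hx Hy)].
      intros n [Hxn Hyn]. simpl in Hxn, Hyn.
      apply Rabs_lt_between in Hxn. apply Rabs_lt_between in Hyn.
      pose proof (CD gamma (- w) (- s) x z Sx Sz n) as Hcd.
      replace (- w - - s) with (s - w) in Hcd by ring.
      assert (Hz : forall k, z k ^ 2 = y k ^ 2).
      { intros k. unfold z. rewrite Rpow_mult_distr, <- pow_mult.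
        replace (k * 2)%nat with (2 * k)%nat by lia. rewrite pow_mult. replace ((-1)^2) with 1 by ring. rewrite pow1. ring. }
      pose proof (cd_bound (gamma n) (x n) (x (S n)) (z n) (z (S n)) (Hpos n)) as Hb.
      rewrite <- Hcd, !Hz, Rabs_mult in Hb.
      unfold K. apply (Rmult_le_reg_l (Rabs (s - w))); auto.
      unfold Rdiv. replace (Rabs (s - w) * ((lx + 1 + (ly + 1)) * / (2 * Rabs (s - w))))
        with ((lx + 1 + (ly + 1)) / 2) by (field; lra).
      lra. }
    assert (HC : is_lim_seq (fun n => Cmod (Cmult (Cmult (RtoC (sum_n (fun k => x k * z k) n)) E)
                                   (RtoC (/ sum_n (fun j => / gamma j) n)))) 0).
    { apply (is_lim_seq_le_le_loc (fun _ => 0) _ (fun n => (K * Cmod E) * / sum_n (fun j => / gamma j) n)).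
      - eapply filter_imp; [|exact Hev]. intros n Hn.
        rewrite !Cmod_mult, !Cmod_R. pose proof (sumpos gamma Hpos n).
        rewrite (Rabs_pos_eq (/ _)) by (left; apply Rinv_0_lt_compat; auto).
        pose proof (Cmod_ge_0 E). pose proof (Rabs_pos (sum_n (fun k : nat => x k * z k) n)).
        pose proof (Rinv_0_lt_compat _ H). split.
        + apply Rmult_le_pos; [apply Rmult_le_pos|]; lra.
        + apply Rmult_le_compat_r; [lra|]. apply Rmult_le_compat_r; lra.
      - apply is_lim_seq_const.
      - replace (Finite 0) with (Rbar_mult (K * Cmod E) 0) by (simpl; f_equal; ring).
        apply is_lim_seq_scal_l; auto. }
    apply filterlim_locally. intros eps.
    apply is_lim_seq_spec in HC. specialize (HC eps).
    eapply filter_imp; [|exact HC]. intros n Hn. simpl in Hn.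
    apply ballC. rewrite Rminus_0_r, Rabs_pos_eq in Hn by apply Cmod_ge_0. exact Hn.
Qed.
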